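(* Let $X,Y\in\mathbb M(n)$ with $Y$ positive semidefinite, with eigenvalues $\lambda_1(Y)\ge\dots\ge\lambda_n(Y)\ge0$. For $1\le r\le n$, let $$\mathcal W(X,Y)=\Big\{\sum_{i=1}^r\langle u_i,Xu_i\rangle:\ u_1,\dots,u_r\in\mathbb C^n\text{ orthonormal},\ Yu_i=\lambda_i(Y)u_i\ \forall\,1\le i\le r\Big\}.$$ Then $\mathcal W(X,Y)$ is a convex subset of $\mathbb C$.
   Context: Inner products on $\mathbb C^n$ are conjugate linear in the first argument and linear in the second. *)

(* Defs.v *)
(* Complex numbers: an arbitrary numClosedFieldType C
   (algebraically closed field with conjugation, e.g. the complex numbers). *)
From HB Require Import structures.
From mathcomp Require Import all_boot all_order all_algebra.
Set Implicit Arguments. Unset Strict Implicit. Unset Printing Implicit Defensive.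
Import Order.TTheory GRing.Theory Num.Theory.
Local Open Scope ring_scope.

Definition adjmx (C : numClosedFieldType) m n (A : 'M[C]_(m, n)) : 'M[C]_(n, m) :=
  (map_mx Num.conj A)^T.

Definition cdot (C : numClosedFieldType) n (u v : 'cV[C]_n) : C :=
  (adjmx u *m v) 0 0.

Definition hermitian (C : numClosedFieldType) n (A : 'M[C]_n) : Prop :=
  adjmx A = A.

Definition psd (C : numClosedFieldType) n (A : 'M[C]_n) : Prop :=
  hermitian A /\ forall x : 'cV[C]_n, 0 <= cdot x (A *m x).

(* lam 0 >= lam 1 >= ... >= lam (n-1) are the eigenvalues of Y, with multiplicity *)
Definition sorted_eigenvalues (C : numClosedFieldType) n (Y : 'M[C]_n)
    (lam : nat -> C) : Prop :=
  char_poly Y = \prod_(i < n) ('X - (lam i)%:P) /\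
  (forall i j : nat, (i <= j < n)%N -> lam j <= lam i).

Definition Wset (C : numClosedFieldType) n (r : nat) (X Y : 'M[C]_n)
    (lam : nat -> C) : C -> Prop :=
  fun z => exists u : 'I_r -> 'cV[C]_n,
    (forall i j : 'I_r, cdot (u i) (u j) = (i == j)%:R) /\
    (forall i : 'I_r, Y *m u i = lam i *: u i) /\
    z = \sum_(i < r) cdot (u i) (X *m u i).

Definition convex_set (C : numClosedFieldType) (S : C -> Prop) : Prop :=
  forall z1 z2 t : C, S z1 -> S z2 -> 0 <= t <= 1 -> S (t * z1 + (1 - t) * z2).

(* Main.v *)
Require Import Defs.
From HB Require Import structures.
From mathcomp Require Import all_boot all_order all_algebra.
From mathcomp Require Import ring zify.
Import Order.TTheory GRing.Theory Num.Theory.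
Local Open Scope ring_scope.
Set Implicit Arguments. Unset Strict Implicit. Unset Printing Implicit Defensive.

Section Basics.
Variable C : numClosedFieldType.
Local Notation "A ^H" := (adjmx A) (at level 8, format "A ^H").

Lemma adjmxE m n (A : 'M[C]_(m,n)) i j : A^H i j = (A j i)^*.
Proof. by rewrite /adjmx !mxE. Qed.

Lemma adjmxM m n p (A : 'M[C]_(m,n)) (B : 'M[C]_(n,p)) :
  (A *m B)^H = B^H *m A^H.
Proof. by rewrite /adjmx map_mxM trmx_mul. Qed.

Lemma adjmxK m n (A : 'M[C]_(m,n)) : A^H^H = A.
Proof. by apply/matrixP=> i j; rewrite /adjmx !mxE conjCK. Qed.

Lemma adjmxD m n (A B : 'M[C]_(m,n)) : (A + B)^H = A^H + B^H.
Proof. by apply/matrixP=> i j; rewrite /adjmx !mxE rmorphD. Qed.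

Lemma adjmxN m n (A : 'M[C]_(m,n)) : (- A)^H = - A^H.
Proof. by apply/matrixP=> i j; rewrite /adjmx !mxE rmorphN. Qed.

Lemma adjmxB m n (A B : 'M[C]_(m,n)) : (A - B)^H = A^H - B^H.
Proof. by rewrite adjmxD adjmxN. Qed.

Lemma adjmxZ m n a (A : 'M[C]_(m,n)) : (a *: A)^H = a^* *: A^H.
Proof. by apply/matrixP=> i j; rewrite /adjmx !mxE rmorphM. Qed.

Lemma adjmx0 m n : (0 : 'M[C]_(m,n))^H = 0.
Proof. by apply/matrixP=> i j; rewrite /adjmx !mxE conjC0. Qed.

Lemma adjmx_scalar n a : (a%:M : 'M[C]_n)^H = (a^*)%:M.
Proof.
apply/matrixP=> i j; rewrite /adjmx !mxE eq_sym.
by case: (i == j); rewrite ?mulr1n ?mulr0n ?conjC0.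
Qed.

Lemma adjmx1 n : (1%:M : 'M[C]_n)^H = 1%:M.
Proof. by rewrite adjmx_scalar conjC1. Qed.

Lemma adjmx_row_mx m n1 n2 (A : 'M[C]_(m,n1)) (B : 'M[C]_(m,n2)) :
  (row_mx A B)^H = col_mx A^H B^H.
Proof. by rewrite /adjmx map_row_mx tr_row_mx. Qed.

Lemma adjmx_col_mx m1 m2 n (A : 'M[C]_(m1,n)) (B : 'M[C]_(m2,n)) :
  (col_mx A B)^H = row_mx A^H B^H.
Proof. by rewrite /adjmx map_col_mx tr_col_mx. Qed.

Lemma adjmx_block m1 m2 n1 n2 (A : 'M[C]_(m1,n1)) (B : 'M[C]_(m1,n2))
   (Cc : 'M[C]_(m2,n1)) (D : 'M[C]_(m2,n2)) :
  (block_mx A B Cc D)^H = block_mx A^H Cc^H B^H D^H.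
Proof. by rewrite /adjmx map_block_mx tr_block_mx. Qed.

Lemma tr_adjmx n (A : 'M[C]_n) : \tr A^H = (\tr A)^*.
Proof. by rewrite /mxtrace rmorph_sum; apply: eq_bigr => i _; rewrite /adjmx !mxE. Qed.


Local Notation cd := (@cdot C _).

Lemma cdotE n (u v : 'cV[C]_n) : cd u v = \sum_k (u k 0)^* * v k 0.
Proof. by rewrite /cdot !mxE; apply: eq_bigr => k _; rewrite /adjmx !mxE. Qed.

Lemma cdotDl n (u w v : 'cV[C]_n) : cd (u + w) v = cd u v + cd w v.
Proof. by rewrite !cdotE -big_split; apply: eq_bigr=> k _; rewrite mxE rmorphD mulrDl. Qed.

Lemma cdotDr n (u w v : 'cV[C]_n) : cd v (u + w) = cd v u + cd v w.
Proof. by rewrite !cdotE -big_split; apply: eq_bigr=> k _; rewrite mxE mulrDr. Qed.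

Lemma cdotZl n a (u v : 'cV[C]_n) : cd (a *: u) v = a^* * cd u v.
Proof. by rewrite !cdotE mulr_sumr; apply: eq_bigr=> k _; rewrite mxE rmorphM /= mulrA. Qed.

Lemma cdotZr n a (u v : 'cV[C]_n) : cd v (a *: u) = a * cd v u.
Proof. by rewrite !cdotE mulr_sumr; apply: eq_bigr=> k _; rewrite mxE mulrCA. Qed.

Lemma cdotC n (u v : 'cV[C]_n) : cd v u = (cd u v)^*.
Proof. by rewrite !cdotE rmorph_sum; apply: eq_bigr=> k _; rewrite rmorphM /= conjCK mulrC. Qed.

Lemma cdot_ge0 n (u : 'cV[C]_n) : 0 <= cd u u.
Proof. by rewrite cdotE sumr_ge0 // => k _; rewrite mulrC mul_conjC_ge0. Qed.

Lemma cdot_eq0 n (u : 'cV[C]_n) : cd u u = 0 -> u = 0.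
Proof.
rewrite cdotE => /eqP; rewrite psumr_eq0; last by move=> k _; rewrite mulrC mul_conjC_ge0.
move=> /allP H; apply/matrixP => i j; rewrite ord1 mxE.
have := H i (mem_index_enum i); rewrite /= mulrC mul_conjC_eq0 => /eqP //.
Qed.

Lemma cdotXl n (A : 'M[C]_n) (u v : 'cV[C]_n) : cd u (A *m v) = cd (A^H *m u) v.
Proof. by rewrite /cdot adjmxM adjmxK mulmxA. Qed.

Lemma cdot0r n (u : 'cV[C]_n) : cd u 0 = 0.
Proof. by rewrite cdotE big1 // => k _; rewrite mxE mulr0. Qed.

Lemma phase (c : C) : exists w : C, w^* * w = 1 /\ (w * c)^* = w * c.
Proof.
have [->|c0] := eqVneq c 0; first by exists 1; rewrite conjC1 mulr1 mulr0 conjC0.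
have n0 : `|c| != 0 by rewrite normr_eq0.
have nr : (`|c|)^* = `|c| by rewrite geC0_conj.
exists (c^* / `|c|); split.
  rewrite rmorphM /= conjCK fmorphV /= nr mulrACA -normCK.
  by field.
rewrite mulrAC -normCKC expr2 mulfK //.
Qed.


Lemma cd_expand n (u v w z : 'cV[C]_n) a b c d :
  cd (a*:u + b*:v) (c*:w + d*:z) =
  a^* * c * cd u w + a^* * d * cd u z + b^* * c * cd v w + b^* * d * cd v z.
Proof. by rewrite !cdotDl !cdotDr !cdotZl !cdotZr; ring. Qed.

Lemma mulmx_lin n (A : 'M[C]_n) (u v : 'cV[C]_n) a b :
  A *m (a *: u + b *: v) = a *: (A *m u) + b *: (A *m v).
Proof. by rewrite mulmxDr !scalemxAr. Qed.

Lemma rho_real (om m1 m2 : C) : (om * (m1 - m2^*))^* = om * (m1 - m2^*) ->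
  (om * m1 + om^* * m2)^* = om * m1 + om^* * m2.
Proof.
move=> h; apply/eqP; rewrite -subr_eq0.
have -> : (om * m1 + om^* * m2)^* - (om * m1 + om^* * m2) =
   (om * (m1 - m2^*))^* - om * (m1 - m2^*).
  rewrite !rmorphD !rmorphM /= rmorphB /= !conjCK; ring.
by rewrite h subrr.
Qed.

Lemma TH n (X : 'M[C]_n) (p q : 'cV[C]_n) (t : C) :
  cd p p = 1 -> cd q q = 1 -> 0 <= t <= 1 ->
  exists a b : C, cd (a *: p + b *: q) (a *: p + b *: q) = 1 /\
    cd (a *: p + b *: q) (X *m (a *: p + b *: q)) =
      t * cd p (X *m p) + (1 - t) * cd q (X *m q).
Proof.
move=> pp qq /andP[t0 t1].
set w0 := cd p (X *m p); set w1 := cd q (X *m q).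
have [e01|ne01] := eqVneq w0 w1.
  exists 1, 0; rewrite scale0r addr0 scale1r pp; split => //.
  by rewrite -/w0 e01; ring.
have [->|tn0] := eqVneq t 0.
  exists 0, 1; rewrite scale0r add0r scale1r qq; split => //.
  by rewrite -/w1; ring.
set g := cd p q.
have gC : cd q p = g^* by rewrite cdotC.
set d := w0 - w1.
have dn0 : d != 0 by rewrite subr_eq0.
set m1 := (cd p (X *m q) - w1 * g) / d.
set m2 := (cd q (X *m p) - w1 * g^*) / d.
have [om [hom hr]] := phase (m1 - m2^*).
set rho := om * m1 + om^* * m2.
have rhoR : rho^* = rho by apply: rho_real.

set gam := om * g + (om * g)^*.
have gamR : gam^* = gam by rewrite /gam rmorphD /= conjCK addrC.
have tR : t^* = t by rewrite geC0_conj.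
set B := t * gam - rho.
have BR : B^* = B by rewrite /B rmorphB rmorphM /= tR gamR rhoR.
set Dl := B ^+ 2 + 4 * t * (1 - t).
have Dl0 : 0 <= Dl.
  rewrite /Dl addr_ge0 //; last by rewrite !mulr_ge0 ?subr_ge0 // ler0n.
  by rewrite (_ : B ^+ 2 = `|B| ^+ 2) ?exprn_ge0 // normCKC BR expr2.
set S := sqrtC Dl.
have SR : S^* = S by rewrite geC0_conj // sqrtC_ge0.
have SS : S ^+ 2 = Dl by rewrite sqrtCK.
have two0 : (2 : C) != 0 by rewrite pnatr_eq0.
set x := (S - B) / (2 * t).
have xR : x^* = x.
  by rewrite /x rmorphM /= fmorphV /= rmorphB rmorphM /= SR BR tR rmorph_nat.
have key : t * x ^+ 2 + B * x + (t - 1) = 0.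
  have : 4 * t * (t * x ^+ 2 + B * x + (t - 1)) = (2 * t * x + B) ^+ 2 - S ^+ 2.
    rewrite SS /Dl; ring.
  have -> : 2 * t * x + B = S by rewrite /x; field.
  rewrite subrr => /eqP; rewrite !mulf_eq0 (negbTE tn0) orbF => /orP[|/eqP//].
  by rewrite (_ : 4 = 2 * 2 :> C) ?mulf_eq0 ?(negbTE two0) //; ring.
set s := x * om.
set z := 1 *: p + s *: q.
have sC : s^* * s = x ^+ 2.
  by rewrite /s rmorphM /= xR mulrACA hom mulr1 expr2.
have NE : cd z z = 1 + x ^+ 2 + x * gam.
  rewrite /z cd_expand pp qq gC -/g sC conjC1 /gam /s rmorphM /= xR; ring.
have VE : cd z (X *m z) = (w1 + d * t) * cd z z.
  rewrite /z mulmx_lin cd_expand -/w0 -/w1 NE conjC1.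
  have e1 : cd p (X *m q) = m1 * d + w1 * g by rewrite /m1 mulfVK // subrK.
  have e2 : cd q (X *m p) = m2 * d + w1 * g^* by rewrite /m2 mulfVK // subrK.
  rewrite e1 e2.
  have e3 : s^* = x * om^* by rewrite /s rmorphM /= xR.
  rewrite e3.
  have e4 : 1 + x * rho = t * (1 + x ^+ 2 + x * gam).
    by apply/eqP; rewrite -subr_eq0; rewrite -[X in _ == X](oppr0) -key; apply/eqP; rewrite /B; ring.
  have e5 : x ^+ 2 = x * om * (x * om^*) by rewrite -e3 -sC mulrC.
  rewrite /d; rewrite /rho in e4.
  apply/eqP; rewrite -subr_eq0; apply/eqP.
  transitivity ((w0 - w1) * ((1 + x * (om * m1 + om^* * m2)) - t * (1 + x ^+ 2 + x * gam)) + x ^+ 2 * w1 * (om^* * om - 1)).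
    rewrite /gam rmorphM /=; rewrite /s; ring.
  by rewrite e4 hom !subrr mulr0 mulr0 addr0.
have Nn0 : cd z z != 0.
  apply/eqP => N0; have z0 := cdot_eq0 N0.
  move/eqP: z0; rewrite addr_eq0 scale1r -scaleNr => /eqP pE.
  have h1 : cd p p = x ^+ 2 by rewrite pE cdotZl cdotZr qq mulr1 rmorphN /= mulNr mulrN opprK sC.
  have h2 : w0 = x ^+ 2 * w1.
    rewrite /w0 pE -scalemxAr cdotZl cdotZr rmorphN /=; rewrite -/w1 -sC; ring.
  by move: ne01; rewrite h2 -h1 pp mul1r eqxx.
have N0 : 0 < cd z z by rewrite lt_def Nn0 cdot_ge0.
set k := (sqrtC (cd z z))^-1.
have kR : k^* = k by rewrite geC0_conj // invr_ge0 sqrtC_ge0 cdot_ge0.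
have kk : k * k * cd z z = 1.
  by rewrite -expr2 exprVn sqrtCK mulVf.
exists k, (k * s).
have -> : k *: p + (k * s) *: q = k *: z by rewrite /z scale1r scalerDr scalerA.
split; first by rewrite cdotZl cdotZr kR mulrA kk.
rewrite -scalemxAr cdotZl cdotZr VE kR.
transitivity ((w1 + d * t) * (k * k * cd z z)); first by ring.
by rewrite kk /d; ring.
Qed.


Lemma cdM n (u v : 'cV[C]_n) : u^H *m v = (cd u v)%:M.
Proof. exact: mx11_scalar. Qed.

Lemma outer_mul n (w v : 'cV[C]_n) : (w *m w^H) *m v = cd w v *: w.
Proof. by rewrite -mulmxA cdM mul_mx_scalar. Qed.

Lemma cdotNl n (u v : 'cV[C]_n) : cd (- u) v = - cd u v.
Proof. by rewrite -scaleN1r cdotZl rmorphN1 mulN1r. Qed.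
Lemma cdotNr n (u v : 'cV[C]_n) : cd v (- u) = - cd v u.
Proof. by rewrite -scaleN1r cdotZr mulN1r. Qed.
Lemma cdotBl n (u w v : 'cV[C]_n) : cd (u - w) v = cd u v - cd w v.
Proof. by rewrite cdotDl cdotNl. Qed.
Lemma cdotBr n (u w v : 'cV[C]_n) : cd v (u - w) = cd v u - cd v w.
Proof. by rewrite cdotDr cdotNr. Qed.

Lemma refl_map n (a b : 'cV[C]_n) : cd a a = 1 -> cd b b = 1 ->
  exists R : 'M[C]_n, R^H *m R = 1%:M /\ R *m b = a /\
   forall (D : 'M[C]_n) c, D^H = D -> c^* = c -> D *m a = c *: a ->
     D *m b = c *: b -> D *m R = R *m D.
Proof.
move=> aa bb.
have [om [hom hr]] := phase (cd a b).
have hom' : om * om^* = 1 by rewrite mulrC.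
set a' := om^* *: a.
have a'a' : cd a' a' = 1 by rewrite cdotZl cdotZr conjCK aa mulr1.
set r := cd a' b.
have rE : r = om * cd a b by rewrite /r cdotZl conjCK.
have rR : r^* = r by rewrite rE hr.
have ba' : cd b a' = r by rewrite cdotC rR.
set w := b - a'.
have wb : cd w b = 1 - r by rewrite /w cdotBl bb.
have ww : cd w w = 2 - 2 * r.
  by rewrite /w !cdotBl !cdotBr bb a'a' ba' -/r; ring.
set s := 2 / cd w w.
have sR : s^* = s.
  by rewrite /s rmorphM /= fmorphV /= (geC0_conj (cdot_ge0 _)) rmorph_nat.
have ss : s * s * cd w w = 2 * s.
  have [w0|wn0] := eqVneq (cd w w) 0; first by rewrite /s w0 invr0 !mulr0.
  by rewrite /s; field.
have sw : (s * cd w b) *: w = w.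
  have [w0|wn0] := eqVneq (cd w w) 0.
    by rewrite (cdot_eq0 w0) scaler0.
  have e2 : 2 - 2 * r = 2 * (1 - r) by ring.
  have r1 : 1 - r != 0.
    by apply: contraNneq wn0 => h; rewrite ww e2 h mulr0.
  rewrite wb /s ww e2 (_ : 2 / (2 * (1 - r)) * (1 - r) = 1) ?scale1r //.
  by field.
set W := w *m w^H.
set H := 1%:M - s *: W.
have Hb : H *m b = a'.
  rewrite /H mulmxBl mul1mx -scalemxAl outer_mul scalerA sw /w.
  by rewrite opprB addrC subrK.
have HH : H^H = H by rewrite /H adjmxB adjmx1 adjmxZ /W adjmxM adjmxK sR.
have WW : W *m W = cd w w *: W.
  by rewrite /W mulmxA outer_mul scalemxAl.
have H2 : H *m H = 1%:M.
  rewrite /H mulmxBl mul1mx mulmxBr mulmx1.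
  rewrite -scalemxAl -scalemxAr scalerA WW scalerA ss.
  rewrite (_ : 2 * s = s + s); last by ring.
  by rewrite scalerDl opprB addrK subrK.
exists (om *: H); split; last split.
- by rewrite adjmxZ -scalemxAl -scalemxAr scalerA hom HH H2 scale1r.
- by rewrite -scalemxAl Hb /a' scalerA hom' scale1r.
move=> D c DH cR Da Db.
have Dw : D *m w = c *: w.
  by rewrite /w mulmxBr Db /a' -scalemxAr Da scalerBr !scalerA mulrC.
have wD : w^H *m D = c *: w^H.
  by rewrite -DH -adjmxM Dw adjmxZ cR.
have DW : D *m W = W *m D.
  by rewrite /W mulmxA Dw -mulmxA wD -scalemxAl scalemxAr.
rewrite -scalemxAr -scalemxAl; congr (_ *: _).
by rewrite /H mulmxBr mulmxBl mulmx1 mul1mx -!scalemxAr -scalemxAl DW.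
Qed.


Lemma rank_adjmx m n (A : 'M[C]_(m,n)) : \rank A^H = \rank A.
Proof. by rewrite /adjmx mxrank_tr mxrank_map. Qed.

Lemma row_eq0 k (u : 'rV[C]_k) : (u *m u^H) 0 0 = 0 -> u = 0.
Proof.
move=> h; rewrite -[u]adjmxK; apply/eqP; rewrite (_ : u^H = 0) ?adjmx0 //.
by apply: cdot_eq0; rewrite /cdot adjmxK.
Qed.

Lemma kswap_row k (D N : 'M[C]_k) c (v : 'rV[C]_k) : D^H = D -> D *m N = N *m D ->
  v != 0 -> v *m D = c *: v -> v *m N = 0 ->
  exists w : 'rV[C]_k, w != 0 /\ w *m D = c *: w /\ w *m N^H = 0.
Proof.
move=> DH DN v0 vD vN.
set E := kermx (D - c%:M).
have inE (r : 'rV[C]_k) : (r <= E)%MS = (r *m D == c *: r).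
  by rewrite /E; apply/sub_kermxP/eqP; rewrite mulmxBr mul_mx_scalar;
     [move/eqP; rewrite subr_eq0 => /eqP | move->; rewrite subrr].
set EN := E *m N.
have rk1 : (\rank EN < \rank E)%N.
  rewrite -(mxrank_mul_ker E N) -/EN -[X in (X < _)%N]addn0 ltn_add2l lt0n mxrank_eq0.
  apply/rowV0Pn; exists v => //; rewrite sub_capmx inE vD eqxx /=.
  by apply/sub_kermxP.
set K := kermx EN^H.
have rkK : \rank K = (k - \rank EN)%N by rewrite mxrank_ker rank_adjmx.
have : (E :&: K)%MS != 0.
  rewrite -mxrank_eq0 -lt0n.
  have h := mxrank_sum_cap E K.
  have hle := rank_leq_col (E + K)%MS.
  have hEN := rank_leq_col EN.
  lia.
move=> /rowV0Pn [w]; rewrite sub_capmx => /andP[wE wK] w0.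
exists w; split => //; split; first by apply/eqP; rewrite -inE.
have NHD : N^H *m D = D *m N^H by rewrite -{1}DH -adjmxM DN adjmxM DH.
set u := w *m N^H.
have uE : (u <= E)%MS.
  by rewrite inE /u -mulmxA NHD mulmxA; move: wE; rewrite inE => /eqP ->; rewrite scalemxAl.
move/submxP: uE => [e ue].
apply: row_eq0.
have -> : u *m u^H = w *m (u *m N)^H by rewrite [(u *m N)^H]adjmxM mulmxA.
rewrite ue -mulmxA -/EN adjmxM mulmxA.
by move/sub_kermxP: wK => ->; rewrite mul0mx mxE.
Qed.


Lemma normalize n (u : 'cV[C]_n) : u != 0 ->
  exists k : C, k != 0 /\ cd (k *: u) (k *: u) = 1.
Proof.
move=> u0.
have N0 : cd u u != 0 by apply: contra u0 => /eqP /cdot_eq0 ->.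
set k := (sqrtC (cd u u))^-1.
have kR : k^* = k by rewrite geC0_conj // invr_ge0 sqrtC_ge0 cdot_ge0.
exists k; split; first by rewrite invr_eq0 sqrtC_eq0.
by rewrite cdotZl cdotZr kR mulrA -expr2 exprVn sqrtCK mulVf.
Qed.

Lemma herm_real n (D : 'M[C]_n) c (y : 'cV[C]_n) : D^H = D -> y != 0 ->
  D *m y = c *: y -> c^* = c.
Proof.
move=> DH y0 Dy.
have N0 : cd y y != 0 by apply: contra y0 => /eqP /cdot_eq0 ->.
have : c * cd y y = c^* * cd y y.
  by rewrite -cdotZr -Dy cdotXl DH Dy cdotZl.
by move/(mulIf N0).
Qed.

Lemma pair_exists k (D M : 'M[C]_k) : (0 < k)%N -> D^H = D -> D *m M = M *m D ->
  exists c (x y : 'cV[C]_k), [/\ c^* = c, cd x x = 1, cd y y = 1,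
    D *m x = c *: x & D *m y = c *: y] /\ (exists al, M *m y = al *: x) /\ (exists be, M^H *m x = be *: y).
Proof.
move=> k0 DH DM.
have DMH : D *m M^H = M^H *m D by rewrite -{1}DH -adjmxM -DM adjmxM DH.
set G := M^H *m M.
have DG : D *m G = G *m D by rewrite /G mulmxA DMH -!mulmxA DM.
have DGT : D^T *m G^T = G^T *m D^T by rewrite -!trmx_mul DG.
have [v v0 /andP[s1 s2]] := @common_eigenvector2 C k D^T G^T k0 DGT.
move/sub_rVP: s1 => [c vc]; move/sub_rVP: s2 => [mu vmu].
set y0 := v^T.
have y00 : y0 != 0 by rewrite /y0 trmx_eq0.
have Dy0 : D *m y0 = c *: y0 by rewrite /y0 -[D]trmxK -trmx_mul vc linearZ.
have Gy0 : G *m y0 = mu *: y0 by rewrite /y0 -[G]trmxK -trmx_mul vmu linearZ.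
have cR : c^* = c by apply: herm_real DH y00 Dy0.
have [ky [ky0 yy]] := normalize y00.
set y := ky *: y0.
have Dy : D *m y = c *: y by rewrite /y -scalemxAr Dy0 !scalerA mulrC.
have Gy : G *m y = mu *: y by rewrite /y -scalemxAr Gy0 !scalerA mulrC.
have [My0|Myn0] := eqVneq (M *m y) 0.
  have yn0 : y != 0 by rewrite /y scaler_eq0 negb_or ky0 y00.
  have v0' : y^H != 0 by apply: contra yn0 => /eqP h; rewrite -[y]adjmxK h adjmx0.
  have vD : y^H *m D = c *: y^H by rewrite -{1}DH -adjmxM Dy adjmxZ cR.
  have vN : y^H *m M^H = 0 by rewrite -adjmxM My0 adjmx0.
  have [w [w0 [wD wN]]] := kswap_row DH DMH v0' vD vN.
  rewrite adjmxK in wN.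
  set x0 := w^H.
  have x00 : x0 != 0 by apply: contra w0 => /eqP h; rewrite -[w]adjmxK -/x0 h adjmx0.
  have Dx0 : D *m x0 = c *: x0 by rewrite /x0 -{1}DH -adjmxM wD adjmxZ cR.
  have Mx0 : M^H *m x0 = 0 by rewrite /x0 -adjmxM wN adjmx0.
  have [kx [kx0 xx]] := normalize x00.
  exists c, (kx *: x0), y; split; first split => //.
    by rewrite -scalemxAr Dx0 !scalerA mulrC.
  split; first by exists 0; rewrite My0 scale0r.
  by exists 0; rewrite -scalemxAr Mx0 scaler0 scale0r.
set x0 := M *m y.
have Dx0 : D *m x0 = c *: x0 by rewrite /x0 mulmxA DM -mulmxA Dy -scalemxAr.
have MHx0 : M^H *m x0 = mu *: y by rewrite /x0 mulmxA -/G Gy.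
have [kx [kx0 xx]] := normalize Myn0.
exists c, (kx *: x0), y; split; first split => //.
  by rewrite -scalemxAr Dx0 !scalerA mulrC.
split; first by exists kx^-1; rewrite scalerA mulVf // scale1r.
by exists (kx * mu); rewrite -scalemxAr MHx0 scalerA.
Qed.


Lemma adj_row_mul n k1 k2 (a : 'M[C]_(n,k1)) (b : 'M[C]_(n,k2)) (c : 'M[C]_(n,k1)) (d : 'M[C]_(n,k2)) :
  (row_mx a b)^H *m row_mx c d = block_mx (a^H *m c) (a^H *m d) (b^H *m c) (b^H *m d).
Proof. by rewrite adjmx_row_mx mul_col_row. Qed.

Lemma val_row n k1 k2 (X : 'M[C]_n) (a : 'M[C]_(n,k1)) (b : 'M[C]_(n,k2)) :
  \tr ((row_mx a b)^H *m X *m row_mx a b) = \tr (a^H *m X *m a) + \tr (b^H *m X *m b).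
Proof. by rewrite adjmx_row_mx mul_col_mx mul_col_row mxtrace_block. Qed.

Lemma eig_row n k (Y : 'M[C]_n) (a : 'cV[C]_n) (b : 'M[C]_(n,k)) c (D' : 'M[C]_k) :
  (Y *m row_mx a b = row_mx a b *m block_mx c%:M 0 0 D') <->
  (Y *m a = c *: a /\ Y *m b = b *m D').
Proof.
rewrite mul_mx_row mul_row_block !mulmx0 addr0 add0r mul_mx_scalar; split.
  by move=> /eq_row_mx.
by move=> [-> ->].
Qed.

Lemma block1 k (A : 'M[C]_1) (B : 'M[C]_(1,k)) (Cc : 'M[C]_(k,1)) (D : 'M[C]_k) :
  block_mx A B Cc D = 1%:M -> [/\ A = 1%:M, B = 0, Cc = 0 & D = 1%:M].
Proof. by rewrite (scalar_mx_block 1 k) => /eq_block_mx. Qed.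

Lemma mx11_1 (a : C) : (a%:M : 'M[C]_1) = 1%:M -> a = 1.
Proof. by move/matrixP/(_ 0 0); rewrite !mxE. Qed.


Definition Gprop n (X Y : 'M[C]_n) k := forall (D : 'M[C]_k) (P Q : 'M[C]_(n,k)) (t : C),
  D^H = D -> P^H *m P = 1%:M -> Q^H *m Q = 1%:M -> Y *m P = P *m D -> Y *m Q = Q *m D ->
  0 <= t <= 1 ->
  exists Z : 'M[C]_(n,k), [/\ Z^H *m Z = 1%:M, Y *m Z = Z *m D,
     \tr (Z^H *m X *m Z) = t * \tr (P^H *m X *m P) + (1 - t) * \tr (Q^H *m X *m Q) &
     exists (A B : 'M[C]_k), Z = P *m A + Q *m B].

Lemma val_unitary n k (X : 'M[C]_n) (F : 'M[C]_(n,k)) (S : 'M[C]_k) :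
  S *m S^H = 1%:M -> \tr ((F *m S)^H *m X *m (F *m S)) = \tr (F^H *m X *m F).
Proof.
move=> SS; rewrite adjmxM -!mulmxA mxtrace_mulC -!mulmxA.
by rewrite !mulmxA -(mulmxA _ S) SS mulmx1.
Qed.

Lemma conj_frame n k (F : 'M[C]_(n,k)) (D S : 'M[C]_k) : S *m S^H = 1%:M ->
  F *m D *m S = F *m S *m (S^H *m D *m S).
Proof. by move=> SS; rewrite !mulmxA -(mulmxA F S) SS mulmx1. Qed.

Lemma cd11 n (u v : 'cV[C]_n) : u^H *m v = 1%:M -> cd u v = 1.
Proof. by move=> h; rewrite /cdot h mxE. Qed.

Lemma G0 n (X Y : 'M[C]_n) : Gprop X Y 0.
Proof.
move=> D P Q t _ PP QQ YP YQ _; exists P; split => //.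
  by rewrite /mxtrace !big_ord0 !mulr0 addr0.
by exists 1%:M, 0; rewrite mulmx1 mulmx0 addr0.
Qed.


Lemma Gstep n (X Y : 'M[C]_n) k : Y^H = Y -> Gprop X Y k -> Gprop X Y (1 + k).
Proof.
move=> YH IH D P Q t DH PP QQ YP YQ t01.
set M := P^H *m Q.
have PHY : P^H *m Y = D *m P^H by rewrite -{1}YH -adjmxM YP adjmxM DH.
have DM : D *m M = M *m D by rewrite /M mulmxA -PHY -mulmxA YQ mulmxA.
have k0 : (0 < 1 + k)%N by [].
have [c [x [y [[cR xx yy Dx Dy] [[al Myx] [be Mxy]]]]]] := pair_exists k0 DH DM.
set e1 : 'cV[C]_(1 + k) := col_mx 1%:M 0.
have e1H : e1^H = row_mx 1%:M 0 by rewrite /e1 adjmx_col_mx adjmx1 adjmx0.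
have e1e1 : cd e1 e1 = 1.
  by apply: cd11; rewrite e1H /e1 mul_row_col mul1mx mulmx0 addr0.
have [R1 [R1u [R1e _]]] := refl_map yy e1e1.
have [R2 [R2u [R2y R2D]]] := refl_map xx yy.
have R2Dc : D *m R2 = R2 *m D := R2D D c DH cR Dx Dy.
set SQ := R1; set SP := R2 *m R1.
have SQu : SQ^H *m SQ = 1%:M := R1u.
have SQu' : SQ *m SQ^H = 1%:M := mulmx1C SQu.
have SPu : SP^H *m SP = 1%:M.
  by rewrite /SP adjmxM mulmxA -(mulmxA R1^H) R2u mulmx1 R1u.
have SPu' : SP *m SP^H = 1%:M := mulmx1C SPu.
have SPe : SP *m e1 = x by rewrite /SP -mulmxA R1e R2y.
set D1 := SQ^H *m D *m SQ.
have D1P : SP^H *m D *m SP = D1.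
  rewrite /SP /D1 adjmxM -!mulmxA (mulmxA D R2) R2Dc -(mulmxA R2).
  by rewrite (mulmxA R2^H) R2u mul1mx mulmxA.
have D1H : D1^H = D1 by rewrite /D1 !adjmxM adjmxK DH mulmxA.
have D1e : D1 *m e1 = c *: e1.
  by rewrite /D1 -!mulmxA R1e Dy -scalemxAr -R1e mulmxA SQu mul1mx.
set D' := drsubmx D1.
have D1b : D1 = block_mx c%:M 0 0 D'.
  move: D1e D1H; rewrite -[D1]submxK /e1 mul_block_col !mulmx1 !mulmx0 !addr0.
  rewrite scale_col_mx scaler0 scalemx1 => /eq_col_mx [-> ->].
  rewrite adjmx_block adjmx0 => /eq_block_mx [_ <- _ _].
  by [].
have D'H : D'^H = D'.
  by move: D1H; rewrite D1b adjmx_block => /eq_block_mx [_ _ _ ->].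
set P1 := P *m SP; set Q1 := Q *m SQ.
have P1u : P1^H *m P1 = 1%:M.
  by rewrite /P1 adjmxM mulmxA -(mulmxA SP^H) PP mulmx1 SPu.
have Q1u : Q1^H *m Q1 = 1%:M.
  by rewrite /Q1 adjmxM mulmxA -(mulmxA SQ^H) QQ mulmx1 SQu.
have YP1 : Y *m P1 = P1 *m D1.
  by rewrite /P1 mulmxA YP conj_frame // D1P.
have YQ1 : Y *m Q1 = Q1 *m D1.
  by rewrite /Q1 mulmxA YQ conj_frame.
have vP : \tr (P1^H *m X *m P1) = \tr (P^H *m X *m P) by apply: val_unitary.
have vQ : \tr (Q1^H *m X *m Q1) = \tr (Q^H *m X *m Q) by apply: val_unitary.
set T := P1^H *m Q1.
have Te : T *m e1 = al *: e1.
  rewrite /T /P1 /Q1 adjmxM -!mulmxA R1e (mulmxA P^H) -/M Myx -!scalemxAr.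
  by rewrite -SPe mulmxA SPu mul1mx.
have eT : e1^H *m T = be^* *: e1^H.
  rewrite /T /P1 /Q1 adjmxM !mulmxA -adjmxM SPe -(mulmxA x^H) -/M.
  rewrite -[x^H *m M](adjmxK) adjmxM adjmxK Mxy adjmxZ -scalemxAl -R1e.
  by rewrite adjmxM -mulmxA SQu mulmx1.
set p := lsubmx P1; set P' := rsubmx P1.
set q := lsubmx Q1; set Q' := rsubmx Q1.
have P1E : P1 = row_mx p P' by rewrite hsubmxK.
have Q1E : Q1 = row_mx q Q' by rewrite hsubmxK.
move: P1u; rewrite P1E adj_row_mul => /block1 [pp pP' _ PP'].
move: Q1u; rewrite Q1E adj_row_mul => /block1 [qq qQ' _ QQ'].
move: YP1; rewrite P1E D1b => /eig_row [Yp YP'].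
move: YQ1; rewrite Q1E D1b => /eig_row [Yq YQ'].
have TE : T = block_mx (p^H *m q) (p^H *m Q') (P'^H *m q) (P'^H *m Q').
  by rewrite /T P1E Q1E adj_row_mul.
have P'q : P'^H *m q = 0.
  move: Te; rewrite TE /e1 mul_block_col !mulmx1 !mulmx0 !addr0 scale_col_mx scaler0.
  by move=> /eq_col_mx [_ ->].
have pQ' : p^H *m Q' = 0.
  move: eT; rewrite TE e1H mul_row_block !mul1mx !mul0mx !addr0 scale_row_mx scaler0.
  by move=> /eq_row_mx [_ ->].
have [Z' [Z'u YZ' vZ' [A' [B' Z'E]]]] := IH D' P' Q' t D'H PP' QQ' YP' YQ' t01.
have [a [b [zz vz]]] := TH X (cd11 pp) (cd11 qq) t01.
set z := a *: p + b *: q.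
have zZ' : z^H *m Z' = 0.
  rewrite /z Z'E adjmxD !adjmxZ mulmxDl !mulmxDr -!scalemxAl !mulmxA pP' pQ'.
  have qP' : q^H *m P' = 0 by rewrite -[P']adjmxK -adjmxM P'q adjmx0.
  by rewrite qP' qQ' !mul0mx !scaler0 !addr0.
set Z1 := row_mx z Z'.
have Z1u : Z1^H *m Z1 = 1%:M.
  rewrite /Z1 adj_row_mul zZ' Z'u cdM zz.
  rewrite -[Z'^H *m z]adjmxK adjmxM adjmxK zZ' adjmx0.
  by rewrite -scalar_mx_block.
have Yz : Y *m z = c *: z.
  by rewrite /z mulmx_lin Yp Yq !scalerA scalerDr !scalerA (mulrC a) (mulrC b).
have YZ1 : Y *m Z1 = Z1 *m D1 by rewrite D1b; apply/eig_row.
exists (Z1 *m SQ^H); split.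
- by rewrite adjmxM adjmxK mulmxA -(mulmxA SQ) Z1u mulmx1 SQu'.
- by rewrite mulmxA YZ1 /D1 !mulmxA -(mulmxA Z1 SQ^H) -!mulmxA SQu' mulmx1 mulmxA.
- rewrite val_unitary; last by rewrite adjmxK SQu.
  rewrite /Z1 val_row -vP -vQ P1E Q1E !val_row vZ' !trace_mx11 -!mulmxA.
  rewrite -[(z^H *m (X *m z)) 0 0]/(cd z (X *m z)) vz.
  rewrite -[(p^H *m (X *m p)) 0 0]/(cd p (X *m p)).
  rewrite -[(q^H *m (X *m q)) 0 0]/(cd q (X *m q)).
  ring.
exists (SP *m block_mx a%:M 0 0 A' *m SQ^H), (SQ *m block_mx b%:M 0 0 B' *m SQ^H).
have -> : Z1 = P1 *m block_mx a%:M 0 0 A' + Q1 *m block_mx b%:M 0 0 B'.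
  rewrite P1E Q1E !mul_row_block !mulmx0 !addr0 !add0r !mul_mx_scalar add_row_mx.
  by rewrite /Z1 Z'E.
by rewrite /P1 /Q1 mulmxDl !mulmxA.
Qed.


Lemma Gall n (X Y : 'M[C]_n) k : Y^H = Y -> Gprop X Y k.
Proof.
move=> YH; elim: k => [|k IH]; first exact: G0.
exact: (Gstep YH IH).
Qed.

Lemma colM m n p (A : 'M[C]_(m,n)) (B : 'M[C]_(n,p)) j : col j (A *m B) = A *m col j B.
Proof. by apply/matrixP => i l; rewrite !mxE; apply: eq_bigr => k _; rewrite !mxE. Qed.

Lemma adjmul_entry n r (A B : 'M[C]_(n,r)) i j : (A^H *m B) i j = cd (col i A) (col j B).
Proof. by rewrite /cdot !mxE; apply: eq_bigr => k _; rewrite /adjmx !mxE. Qed.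

Lemma tr_frame n r (X : 'M[C]_n) (A : 'M[C]_(n,r)) :
  \tr (A^H *m X *m A) = \sum_i cd (col i A) (X *m col i A).
Proof. by apply: eq_bigr => i _; rewrite -mulmxA adjmul_entry colM. Qed.

End Basics.

Unset Implicit Arguments.
Set Strict Implicit.

Theorem lemma3p1 (C : numClosedFieldType) (n : nat) (X Y : 'M[C]_n)
    (lam : nat -> C) (r : nat) :
  psd Y -> sorted_eigenvalues Y lam -> (1 <= r)%N -> (r <= n)%N ->
  convex_set (Wset r X Y lam).
Proof.
move=> [YH Ypsd] _ _ _ z1 z2 t [u [uo [ue uv]]] [v [vo [ve vv]]] t01.
set D := diag_mx (\row_(i < r) lam i).
set U : 'M[C]_(n,r) := \matrix_(i, j) u j i 0.
set V : 'M[C]_(n,r) := \matrix_(i, j) v j i 0.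
have colU j : col j U = u j by apply/matrixP => i l; rewrite !mxE ord1.
have colV j : col j V = v j by apply/matrixP => i l; rewrite !mxE ord1.
have lamR (i : 'I_r) : (lam i)^* = lam i.
  apply: geC0_conj; have := Ypsd (u i).
  by rewrite ue cdotZr uo eqxx mulr1.
have DH : adjmx D = D.
  apply/matrixP => i j; rewrite /adjmx !mxE eq_sym.
  by case: eqP => [->|_]; rewrite ?mulr1n ?mulr0n ?conjC0 // lamR.
have UU : adjmx U *m U = 1%:M.
  by apply/matrixP => i j; rewrite adjmul_entry !colU uo mxE.
have VV : adjmx V *m V = 1%:M.
  by apply/matrixP => i j; rewrite adjmul_entry !colV vo mxE.
have eigc (W : 'M[C]_(n,r)) : (forall j, Y *m col j W = lam j *: col j W) -> Y *m W = W *m D.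
  move=> h; apply/matrixP => i j; rewrite mul_mx_diag !mxE.
  move/matrixP: (h j) => /(_ i 0); rewrite -colM !mxE => ->.
  by rewrite mulrC.
have YU : Y *m U = U *m D by apply: eigc => j; rewrite colU ue.
have YV : Y *m V = V *m D by apply: eigc => j; rewrite colV ve.
have [Z [ZZ YZ vZ _]] := @Gall C n X Y r YH D U V t DH UU VV YU YV t01.
exists (fun j => col j Z); split; last split.
- by move=> i j; rewrite -adjmul_entry ZZ mxE.
- move=> i; rewrite -colM YZ; apply/matrixP => a b.
  by rewrite /D mul_mx_diag !mxE mulrC.
rewrite -tr_frame vZ !tr_frame uv vv.
by congr (_ + _); congr (_ * _); apply: eq_bigr => i _; rewrite ?colU ?colV.
Qed.
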